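(* Let $d\ge2$, let $K$ be a number field, let $\mathbf A,\mathbf B\in K[t]$ be nonzero coprime polynomials and $\mathbf c=\mathbf A/\mathbf B$. Let $v\in\Omega_{\mathbb Q}$ be a non-archimedean place such that (i) every coefficient of $\mathbf A$ and of $\mathbf B$ is a $v$-adic integer; (ii) the resultant of $\mathbf A$ and $\mathbf B$ and the leading coefficients of $\mathbf A$ and of $\mathbf B$ are $v$-adic units; (iii) if the constant coefficient $a_0$ of $\mathbf A$ is nonzero, then $a_0$ is a $v$-adic unit. Then for each $\lambda\in\overline{\mathbb Q}^*$, $$\frac{\log M_{\mathbf c,n,v}(\lambda)}{d^n}=\frac{\log M_{\mathbf c,1,v}(\lambda)}{d}\quad\text{for all }n\ge1.$$
   Context: For each $v\in\Omega_{\mathbb Q}$ a fixed extension of $|\cdot|_v$ to $\overline{\mathbb Q}$ is used; $x$ is a $v$-adic integer if $|x|_v\le1$ and a $v$-adic unit if $|x|_v=1$. The polynomials $\mathbf A_{\mathbf c,n},\mathbf B_{\mathbf c,n}$ are defined by: $\mathbf A_{\mathbf c,0}=\mathbf A$, $\mathbf B_{\mathbf c,0}=\mathbf B$; if $\mathbf A(0)\neq0$ then $\mathbf A_{\mathbf c,1}=\mathbf A^d+t\mathbf B^d$, $\mathbf B_{\mathbf c,1}=\mathbf A\mathbf B^{d-1}$, while if $\mathbf A(0)=0$ then $\mathbf A_{\mathbf c,1}=(\mathbf A^d+t\mathbf B^d)/t$, $\mathbf B_{\mathbf c,1}=\mathbf A\mathbf B^{d-1}/t$; for $n\ge1$, $\mathbf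 A_{\mathbf c,n+1}=\mathbf A_{\mathbf c,n}^d+t\mathbf B_{\mathbf c,n}^d$, $\mathbf B_{\mathbf c,n+1}=\mathbf A_{\mathbf c,n}\mathbf B_{\mathbf c,n}^{d-1}$. Finally $M_{\mathbf c,n,v}(\lambda)=\max\{|\mathbf A_{\mathbf c,n}(\lambda)|_v,|\mathbf B_{\mathbf c,n}(\lambda)|_v\}$. *)

(* Defs.v *)
From HB Require Import structures.
From mathcomp Require Import all_boot all_order all_algebra all_field.
From mathcomp Require Import reals exp.
Set Implicit Arguments. Unset Strict Implicit. Unset Printing Implicit Defensive.
Import Order.TTheory GRing.Theory Num.Theory.
Local Open Scope ring_scope.

(* Qbar is modelled by algC (the algebraic closure of Q).  A non-archimedean
   place v of Q, together with a fixed extension of |.|_v to Qbar, is a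
   prime p together with an absolute value on algC that is multiplicative,
   ultrametric, positive definite and normalized by |p|_v = 1/p (so that its
   restriction to Q is the usual p-adic absolute value). *)
Definition is_padic_abs (R : realType) (p : nat) (abs : algC -> R) : Prop :=
  [/\ prime p,
      (forall x : algC, abs x = 0 <-> x = 0),
      (forall x : algC, 0 <= abs x),
      (forall x y : algC, abs (x * y) = abs x * abs y)
    & (forall x y : algC, abs (x + y) <= Num.max (abs x) (abs y))
      /\ abs (p%:R) = (p%:R)^-1].

Fixpoint ABc (d : nat) (A B : {poly algC}) (n : nat) : {poly algC} * {poly algC} :=
  match n with
  | 0 => (A, B)
  | 1 => if A.[0] != 0 then (A ^+ d + 'X * B ^+ d, A * B ^+ d.-1)
         else ((A ^+ d + 'X * B ^+ d) %/ 'X, (A * B ^+ d.-1) %/ 'X)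
  | m.+1 => let ab := ABc d A B m in
            (ab.1 ^+ d + 'X * ab.2 ^+ d, ab.1 * ab.2 ^+ d.-1)
  end.

Definition Acn d A B n := (ABc d A B n).1.
Definition Bcn d A B n := (ABc d A B n).2.

Definition Mcnv (R : realType) (abs : algC -> R) d A B n (lam : algC) : R :=
  Num.max (abs (Acn d A B n).[lam]) (abs (Bcn d A B n).[lam]).

(* Main.v *)
Require Import Defs.
From HB Require Import structures.
From mathcomp Require Import all_boot all_order all_algebra all_field.
From mathcomp Require Import reals exp.
From mathcomp Require Import ring lra.
Import Order.TTheory GRing.Theory Num.Theory.
Local Open Scope ring_scope.
Set Implicit Arguments. Unset Strict Implicit.
Lemma abs_ge0 (R : realType) p (abs : algC -> R) : is_padic_abs p abs -> forall x, 0 <= abs x.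
Proof. by case. Qed.
Lemma abs_0 (R : realType) p (abs : algC -> R) : is_padic_abs p abs -> abs 0 = 0.
Proof. by case=> _ H _ _ _; apply/H. Qed.
Lemma abs_M (R : realType) p (abs : algC -> R) : is_padic_abs p abs -> forall x y, abs (x * y) = abs x * abs y.
Proof. by case. Qed.
Lemma abs_D (R : realType) p (abs : algC -> R) : is_padic_abs p abs -> forall x y, abs (x + y) <= Num.max (abs x) (abs y).
Proof. by case=> _ _ _ _ []. Qed.
Lemma abs_eq0 (R : realType) p (abs : algC -> R) : is_padic_abs p abs -> forall x, (abs x = 0) <-> x = 0.
Proof. by case. Qed.
Lemma abs_1 (R : realType) p (abs : algC -> R) : is_padic_abs p abs -> abs 1 = 1.
Proof.
move=> H; have h := abs_M H 1 1; rewrite mulr1 in h.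
have nz : abs 1 != 0 by apply/eqP => /(abs_eq0 H) /eqP; rewrite oner_eq0.
by apply: (mulfI nz); rewrite -h mulr1.
Qed.
Lemma abs_N (R : realType) p (abs : algC -> R) : is_padic_abs p abs -> forall x, abs (- x) = abs x.
Proof.
move=> H x; have h1 : abs (-1) = 1.
  have h := abs_M H (-1) (-1); rewrite mulrNN mulr1 (abs_1 H) in h.
  have g := abs_ge0 H (-1).
  have : (abs (-1) - 1) * (abs (-1) + 1) = 0 by rewrite mulrDr !mulrDl -h; ring.
  move/eqP; rewrite mulf_eq0 => /orP[/eqP|/eqP]; lra.
by rewrite -mulN1r (abs_M H) h1 mul1r.
Qed.
Lemma abs_X (R : realType) p (abs : algC -> R) : is_padic_abs p abs -> forall x n, abs (x ^+ n) = abs x ^+ n.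
Proof.
move=> H x; elim=> [|n IH]; first by rewrite !expr0 (abs_1 H).
by rewrite !exprS (abs_M H) IH.
Qed.
Lemma abs_strict (R : realType) p (abs : algC -> R) : is_padic_abs p abs ->
  forall x y, abs y < abs x -> abs (x + y) = abs x.
Proof.
move=> H x y hxy; have h1 := abs_D H x y.
have h2 := abs_D H (x + y) (- y); rewrite addrK (abs_N H) in h2.
move: h1 h2; rewrite /Num.max; case: ifP => ?; case: ifP => ?; lra.
Qed.
Lemma abs_sum_le (R : realType) p (abs : algC -> R) : is_padic_abs p abs ->
  forall (I : Type) (r : seq I) (P : pred I) (F : I -> algC) (K : R), 0 <= K ->
  (forall i, P i -> abs (F i) <= K) -> abs (\sum_(i <- r | P i) F i) <= K.
Proof.
move=> H I r P F K K0 hF; apply: (big_ind (fun x => abs x <= K)) => //.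
  by rewrite (abs_0 H).
move=> x y hx hy; apply: le_trans (abs_D H x y) _.
by rewrite /Num.max; case: ifP.
Qed.
Lemma abs_sum_lt (R : realType) p (abs : algC -> R) : is_padic_abs p abs ->
  forall (I : Type) (r : seq I) (P : pred I) (F : I -> algC) (K : R), 0 < K ->
  (forall i, P i -> abs (F i) < K) -> abs (\sum_(i <- r | P i) F i) < K.
Proof.
move=> H I r P F K K0 hF; apply: (big_ind (fun x => abs x < K)) => //.
  by rewrite (abs_0 H).
move=> x y hx hy; apply: le_lt_trans (abs_D H x y) _.
by rewrite /Num.max; case: ifP.
Qed.
Lemma abs_prod_le1 (R : realType) p (abs : algC -> R) : is_padic_abs p abs ->
  forall (I : Type) (r : seq I) (P : pred I) (F : I -> algC),
  (forall i, P i -> abs (F i) <= 1) -> abs (\prod_(i <- r | P i) F i) <= 1.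
Proof.
move=> H I r P F hF; apply: (big_ind (fun x => abs x <= 1)) => //.
  by rewrite (abs_1 H).
move=> x y hx hy; rewrite (abs_M H).
have := abs_ge0 H x; have := abs_ge0 H y; nra.
Qed.
Lemma abs_poly_le (R : realType) p (abs : algC -> R) : is_padic_abs p abs ->
  forall (P : {poly algC}) lam (K : R), 0 <= K ->
  (forall i, (i < size P)%N -> abs (P`_i * lam ^+ i) <= K) -> abs P.[lam] <= K.
Proof.
move=> H P lam K K0 hK; rewrite horner_coef.
by apply: (abs_sum_le H) => // i _; apply: hK.
Qed.
Lemma abs_term_le (R : realType) p (abs : algC -> R) : is_padic_abs p abs ->
  forall (P : {poly algC}) lam i, (forall j, abs P`_j <= 1) ->
  abs (P`_i * lam ^+ i) <= abs lam ^+ i.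
Proof.
move=> H P lam i hP; rewrite (abs_M H) (abs_X H).
have := abs_ge0 H lam => g; have := exprn_ge0 i g.
have := hP i; have := abs_ge0 H P`_i; nra.
Qed.
Lemma F1 (R : realType) p (abs : algC -> R) : is_padic_abs p abs ->
  forall (P : {poly algC}) lam, (forall j, abs P`_j <= 1) -> abs lam <= 1 ->
  abs P.[lam] <= 1.
Proof.
move=> H P lam hP hl; apply: (abs_poly_le H) => // i _.
apply: le_trans (abs_term_le H lam i hP) _.
by apply: exprn_ile1 => //; apply: abs_ge0 H _.
Qed.
Lemma F0 (R : realType) p (abs : algC -> R) : is_padic_abs p abs ->
  forall (P : {poly algC}) lam, (forall j, abs P`_j <= 1) -> P`_0 = 0 -> abs lam <= 1 ->
  abs P.[lam] <= abs lam.
Proof.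
move=> H P lam hP h0 hl; apply: (abs_poly_le H) => [|i _]; first exact: abs_ge0 H _.
case: i => [|i]; first by rewrite h0 mul0r (abs_0 H) (abs_ge0 H).
apply: le_trans (abs_term_le H lam i.+1 hP) _.
rewrite exprS; have g := abs_ge0 H lam.
have := exprn_ile1 i g hl; have := exprn_ge0 i g; nra.
Qed.
Lemma F2 (R : realType) p (abs : algC -> R) : is_padic_abs p abs ->
  forall (P : {poly algC}) lam, (forall j, abs P`_j <= 1) -> abs P`_0 = 1 -> abs lam < 1 ->
  abs P.[lam] = 1.
Proof.
move=> H P lam hP h0 hl.
have : P != 0 by apply: contra_eq_neq h0 => ->; rewrite coef0 (abs_0 H); lra.
rewrite -size_poly_eq0; case hs: (size P) => [|n] // _.
rewrite horner_coef hs big_ord_recl /= expr0 mulr1 -h0; apply: (abs_strict H).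
rewrite h0; apply: (abs_sum_lt H) => // i _.
apply: le_lt_trans (abs_term_le H lam _ hP) _.
rewrite /bump /= add1n exprS; have g := abs_ge0 H lam.
have := exprn_ile1 i g (ltW hl); have := exprn_ge0 i g; nra.
Qed.
Lemma F3 (R : realType) p (abs : algC -> R) : is_padic_abs p abs ->
  forall (P : {poly algC}) lam, (forall j, abs P`_j <= 1) -> abs (lead_coef P) = 1 ->
  1 < abs lam -> abs P.[lam] = abs lam ^+ (size P).-1.
Proof.
move=> H P lam hP h0 hl.
have : P != 0 by apply: contra_eq_neq h0 => ->; rewrite lead_coef0 (abs_0 H); lra.
rewrite -size_poly_eq0 lead_coefE in h0 *; case hs: (size P) => [|n] // _.
rewrite hs /= in h0; rewrite horner_coef hs big_ord_recr /= addrC (abs_strict H).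
  by rewrite (abs_M H) h0 mul1r (abs_X H).
rewrite (abs_M H) h0 mul1r (abs_X H).
apply: (abs_sum_lt H) => [|i _]; first by apply: exprn_gt0; lra.
apply: le_lt_trans (abs_term_le H lam _ hP) _.
by rewrite ltr_eXn2l.
Qed.
Lemma abs_sign (R : realType) p (abs : algC -> R) : is_padic_abs p abs ->
  forall n, abs ((-1) ^+ n) = 1.
Proof. by move=> H n; rewrite (abs_X H) (abs_N H) (abs_1 H) expr1n. Qed.
Lemma abs_det_le1 (R : realType) p (abs : algC -> R) : is_padic_abs p abs ->
  forall n (M : 'M[algC]_n), (forall i j, abs (M i j) <= 1) -> abs (\det M) <= 1.
Proof.
move=> H n M hM; rewrite /determinant; apply: (abs_sum_le H) => // s _.
rewrite (abs_M H) (abs_sign H) mul1r; apply: (abs_prod_le1 H) => i _; exact: hM.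
Qed.
Lemma abs_adj_le1 (R : realType) p (abs : algC -> R) : is_padic_abs p abs ->
  forall n (M : 'M[algC]_n), (forall i j, abs (M i j) <= 1) -> forall i j, abs (\adj M i j) <= 1.
Proof.
move=> H n M hM i j; rewrite mxE /cofactor (abs_M H) (abs_sign H) mul1r.
by apply: (abs_det_le1 H) => k l; rewrite !mxE.
Qed.
From mathcomp Require Import zify.
Lemma nat_aux b kk a : (0 < a)%N -> (kk < b.-1)%N -> ((kk.+1 + a).-1 <= b.-1 + a.-1)%N.
Proof. lia. Qed.
Lemma nat_aux2 b kk a : (0 < a)%N -> (kk < b.-1)%N -> ((kk.+1 + a).-1 <= a.-1 + b.-1)%N.
Proof. lia. Qed.
Lemma F4 (R : realType) p (abs : algC -> R) : is_padic_abs p abs ->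
  forall (A B : {poly algC}) lam, A != 0 -> B != 0 ->
  (forall j, abs A`_j <= 1) -> (forall j, abs B`_j <= 1) ->
  abs (resultant A B) = 1 -> abs (lead_coef A) = 1 -> abs lam <= 1 ->
  1 <= Num.max (abs A.[lam]) (abs B.[lam]).
Proof.
move=> H A B lam A0 B0 hA hB hR hlA hl.
set m := Num.max (abs A.[lam]) (abs B.[lam]).
have hm0 : 0 <= m by rewrite le_max (abs_ge0 H).
have hAm : abs A.[lam] <= m by rewrite le_max lexx.
have hBm : abs B.[lam] <= m by rewrite le_max lexx orbT.
have szA : (0 < size A)%N by rewrite size_poly_gt0.
have szB : (0 < size B)%N by rewrite size_poly_gt0.
case hN: ((size B).-1 + (size A).-1)%N => [|N'].
  have hA1 : size A = 1%N by lia.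
  apply: le_trans hAm; rewrite horner_coef hA1 big_ord1 expr0 mulr1.
  by rewrite lead_coefE hA1 in hlA; rewrite hlA.
move: hR; rewrite /resultant.
set N := ((size B).-1 + (size A).-1)%N.
set S := Sylvester_mx A B.
pose v : 'cV[algC]_N := \col_(j < N) lam ^+ j.
have hl0 := abs_ge0 H lam.
have key : forall i, abs ((S *m v) i 0) <= m.
  move=> i; rewrite mxE.
  case hi: (split i) => [k|k].
    have sz : (size ('X^k * A)%R <= N)%N.
      apply: leq_trans (size_polyMleq _ _) _; rewrite size_polyXn /N.
      exact: nat_aux szA (ltn_ord k).
    have -> : \sum_j S i j * v j 0 = ('X^k * A).[lam].
      rewrite (horner_coef_wide _ sz); apply: eq_bigr => j _.
      rewrite /S Sylvester_mxE hi /= coefXnM !mxE.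
      by case: ltnP => h /=; rewrite ?mulr0n ?mulr1n ?mul0r.
    rewrite hornerM hornerXn (abs_M H) (abs_X H); apply: le_trans hAm.
    have := exprn_ile1 k hl0 hl; have := abs_ge0 H A.[lam]; nra.
  have sz : (size ('X^k * B)%R <= N)%N.
    apply: leq_trans (size_polyMleq _ _) _; rewrite size_polyXn /N.
    exact: nat_aux2 szB (ltn_ord k).
  have -> : \sum_j S i j * v j 0 = ('X^k * B).[lam].
    rewrite (horner_coef_wide _ sz); apply: eq_bigr => j _.
    rewrite /S Sylvester_mxE hi /= coefXnM !mxE.
    by case: ltnP => h /=; rewrite ?mulr0n ?mulr1n ?mul0r.
  rewrite hornerM hornerXn (abs_M H) (abs_X H); apply: le_trans hBm.
  have := exprn_ile1 k hl0 hl; have := abs_ge0 H B.[lam]; nra.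
have hS : forall i j, abs (S i j) <= 1.
  move=> i j; rewrite /S Sylvester_mxE.
  by case: (split i) => k /=; case: leqP => _; rewrite ?mulr0n ?mulr1n ?(abs_0 H) ?hA ?hB.
have eq1 : \det S *: v = \adj S *m (S *m v).
  by rewrite mulmxA mul_adj_mx mul_scalar_mx.
have hN0 : (0 < N)%N by rewrite /N hN.
pose i0 : 'I_N := Ordinal hN0.
have E : \det S = \sum_j \adj S i0 j * (S *m v) j 0.
  transitivity ((\det S *: v) i0 0); first by rewrite !mxE expr0 mulr1.
  by rewrite eq1 mxE.
rewrite E => <-; apply: (abs_sum_le H) => // j _.
rewrite (abs_M H); have := abs_adj_le1 H hS i0 j; have := key j.
have := abs_ge0 H (\adj S i0 j); have := abs_ge0 H ((S *m v) j 0); nra.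
Qed.
Lemma real_gt (R : realType) (d : nat) (L x y : R) : (2 <= d)%N -> 1 < L -> 0 <= x -> 0 <= y ->
  L * y ^+ d < x ^+ d ->
  [/\ y < x, L * (x * y ^+ d.-1) ^+ d < (x ^+ d) ^+ d & x * y ^+ d.-1 <= x ^+ d].
Proof.
move=> hd hL hx hy hxy.
have yx : y < x.
  rewrite ltNge; apply/negP => xy.
  have : x ^+ d <= y ^+ d by apply: lerXn2r; rewrite ?nnegrE.
  have := exprn_ge0 d hy; nra.
case: d hd hxy => [|e] // he hxy; rewrite /=.
have he1 : (1 <= e)%N by case: e he {hxy}.
have hX0 : 0 < x ^+ e.+1 by apply: exprn_gt0; lra.
split => //.
  rewrite exprMn -[(y ^+ e) ^+ e.+1]exprM mulnC exprM [X in _ < X]exprS mulrA (mulrC L) -mulrA.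
  rewrite ltr_pM2l //.
  have h1 : (L * y ^+ e.+1) ^+ e < (x ^+ e.+1) ^+ e.
    rewrite ltrXn2r //; first by rewrite -lt0n.
    by apply: mulr_ge0; [lra|apply: exprn_ge0].
  apply: le_lt_trans h1; rewrite exprMn ler_wpM2r //; first by do 2 apply: exprn_ge0.
  case: e he1 {hX0 hxy he} => [|e] // _.
  by rewrite -[X in X <= _]expr1 ler_eXn2l.
rewrite exprS ler_wpM2l //; apply: lerXn2r; rewrite ?nnegrE //; lra.
Qed.
Definition Inv (R : realType) (d : nat) (L x y : R) : Prop :=
  if 1 < L then is_true (L * y ^+ d < x ^+ d)
  else [/\ x <= 1, y <= 1, Num.max x y = 1 & (L < 1 -> x = 1)].

Lemma max_eq1 (R : realType) (x y : R) : x <= 1 -> y <= 1 -> (x = 1 \/ y = 1) -> Num.max x y = 1.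
Proof. by move=> hx hy [->|->]; rewrite /Num.max; case: ifP => //; lra. Qed.

Lemma step_inv (R : realType) p (abs : algC -> R) : is_padic_abs p abs ->
  forall d lam a b, (2 <= d)%N -> Inv d (abs lam) (abs a) (abs b) ->
  Inv d (abs lam) (abs (a ^+ d + lam * b ^+ d)) (abs (a * b ^+ d.-1)) /\
  Num.max (abs (a ^+ d + lam * b ^+ d)) (abs (a * b ^+ d.-1)) = (Num.max (abs a) (abs b)) ^+ d.
Proof.
move=> H d lam a b hd; rewrite /Inv.
have ga := abs_ge0 H a; have gb := abs_ge0 H b; have gl := abs_ge0 H lam.
case: ifP => hL.
  move=> hi; have [yx h2 h3] := real_gt hd hL ga gb hi.
  have ea : abs (a ^+ d + lam * b ^+ d) = abs a ^+ d.
    by rewrite (abs_strict H) ?(abs_X H) // (abs_M H) (abs_X H).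
  rewrite ea (abs_M H) (abs_X H); split => //.
  have -> : Num.max (abs a) (abs b) = abs a by rewrite /Num.max; case: ifP => //; lra.
  by rewrite /Num.max; case: ifP => //; lra.
case=> hx hy hm hl1.
have hxd : abs a ^+ d <= 1 by apply: exprn_ile1.
have hyd : abs b ^+ d <= 1 by apply: exprn_ile1.
have hL1 : abs lam <= 1 by rewrite leNgt hL.
have hlb : abs (lam * b ^+ d) <= 1.
  rewrite (abs_M H) (abs_X H); have := exprn_ge0 d gb; nra.
have ha' : abs (a ^+ d + lam * b ^+ d) <= 1.
  apply: le_trans (abs_D H _ _) _; rewrite ge_max (abs_X H) hxd; exact: hlb.
have hb' : abs (a * b ^+ d.-1) <= 1.
  rewrite (abs_M H) (abs_X H); have := exprn_ile1 d.-1 gb hy; have := exprn_ge0 d.-1 gb; nra.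
have hlt : abs lam < 1 -> abs (a ^+ d + lam * b ^+ d) = 1.
  move=> l1; rewrite (abs_strict H) (abs_X H) ?hl1 ?expr1n //.
  rewrite (abs_M H) (abs_X H); have := exprn_ge0 d gb; nra.
have hmax : Num.max (abs (a ^+ d + lam * b ^+ d)) (abs (a * b ^+ d.-1)) = 1.
  apply: max_eq1 => //.
  have [l1|l1] := ltP (abs lam) 1; first by left; apply: hlt.
  have eL : abs lam = 1 by lra.
  have [xa|xa] := ltP (abs a) 1.
    have yb : abs b = 1 by move: hm; rewrite /Num.max; case: ifP; lra.
    left; rewrite addrC (abs_strict H).
      by rewrite (abs_M H) (abs_X H) eL yb expr1n mulr1.
    rewrite (abs_X H) (abs_M H) (abs_X H) eL yb expr1n mulr1; by rewrite exprn_ilt1 // -lt0n (leq_trans _ hd).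
  have xa1 : abs a = 1 by lra.
  have [yb|yb] := ltP (abs b) 1.
    left; rewrite (abs_strict H) (abs_X H) xa1 ?expr1n //.
    rewrite (abs_M H) (abs_X H) eL mul1r; by rewrite exprn_ilt1 // -lt0n (leq_trans _ hd).
  right; rewrite (abs_M H) (abs_X H) xa1 mul1r; have -> : abs b = 1 by lra.
  by rewrite expr1n.
by rewrite hm expr1n hmax; split => //; split.
Qed.
Lemma ABc_succ d (A B : {poly algC}) n : (1 <= n)%N ->
  ABc d A B n.+1 = ((Acn d A B n) ^+ d + 'X * (Bcn d A B n) ^+ d,
                    (Acn d A B n) * (Bcn d A B n) ^+ d.-1).
Proof. by case: n. Qed.

Lemma Acn_succ d (A B : {poly algC}) n lam : (1 <= n)%N ->
  (Acn d A B n.+1).[lam] = (Acn d A B n).[lam] ^+ d + lam * (Bcn d A B n).[lam] ^+ d.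
Proof. by move=> hn; rewrite {1}/Acn ABc_succ //= hornerD hornerM hornerX !horner_exp. Qed.

Lemma Bcn_succ d (A B : {poly algC}) n lam : (1 <= n)%N ->
  (Bcn d A B n.+1).[lam] = (Acn d A B n).[lam] * (Bcn d A B n).[lam] ^+ d.-1.
Proof. by move=> hn; rewrite {1}/Bcn ABc_succ //= hornerM !horner_exp. Qed.

Lemma divX_eval (P : {poly algC}) lam : P.[0] = 0 -> (P %/ 'X).[lam] * lam = P.[lam].
Proof.
move=> h0; have hd : 'X %| P by rewrite -(subr0 'X) -polyC0 dvdp_XsubCl /root h0.
by rewrite -{2}(divpK hd) hornerM hornerX.
Qed.

Lemma ABc1_nz d (A B : {poly algC}) lam : A.[0] != 0 ->
  (Acn d A B 1).[lam] = A.[lam] ^+ d + lam * B.[lam] ^+ d /\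
  (Bcn d A B 1).[lam] = A.[lam] * B.[lam] ^+ d.-1.
Proof.
by move=> h; rewrite /Acn /Bcn /= h /= hornerD !hornerM hornerX !horner_exp.
Qed.

Lemma ABc1_z d (A B : {poly algC}) lam : (0 < d)%N -> A.[0] = 0 ->
  (Acn d A B 1).[lam] * lam = A.[lam] ^+ d + lam * B.[lam] ^+ d /\
  (Bcn d A B 1).[lam] * lam = A.[lam] * B.[lam] ^+ d.-1.
Proof.
move=> hd h; rewrite /Acn /Bcn /= h eqxx /=.
rewrite !divX_eval ?hornerD ?hornerM ?hornerX ?horner_exp ?h //.
  by rewrite mul0r.
by rewrite mul0r addr0 -(prednK hd) exprS mul0r.
Qed.
Lemma N1 d a b : (2 <= d)%N -> (b < a)%N -> ((b * d).+1 < a * d)%N.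
Proof. move=> hd hab; nia. Qed.
Lemma N2 d a b : (2 <= d)%N -> (b < a)%N -> (((a + b * d.-1) * d).+1 < a * d * d)%N.
Proof. case: d => [|[|e]] // _ hab; rewrite /=; nia. Qed.
Lemma N3 d a b : (2 <= d)%N -> (a <= b)%N -> (a * d < (b * d).+1)%N.
Proof. move=> hd hab; nia. Qed.
Lemma N4 d a b : (2 <= d)%N -> (a <= b)%N -> (((a + b * d.-1) * d).+1 < (b * d).+1 * d)%N.
Proof. case: d => [|[|e]] // _ hab; rewrite /=; nia. Qed.
Lemma base_gt (R : realType) p (abs : algC -> R) : is_padic_abs p abs ->
  forall d lam (a b : algC) (al be : nat), (2 <= d)%N -> 1 < abs lam ->
  abs a = abs lam ^+ al -> abs b = abs lam ^+ be ->
  abs lam * abs (a * b ^+ d.-1) ^+ d < abs (a ^+ d + lam * b ^+ d) ^+ d.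
Proof.
move=> H d lam a b al be hd hL ha hb.
set L := abs lam in hL ha hb *.
have eb : abs (a * b ^+ d.-1) = L ^+ (al + be * d.-1).
  by rewrite (abs_M H) (abs_X H) ha hb -exprM -exprD.
have e1 : abs (a ^+ d) = L ^+ (al * d) by rewrite (abs_X H) ha -exprM.
have e2 : abs (lam * b ^+ d) = L ^+ (be * d).+1 by rewrite (abs_M H) (abs_X H) hb -exprM -exprS.
rewrite eb -exprM -exprS.
have [lt|le] := ltnP be al.
  have ea : abs (a ^+ d + lam * b ^+ d) = L ^+ (al * d).
    by rewrite -e1; apply: (abs_strict H); rewrite e1 e2 ltr_eXn2l // N1.
  by rewrite ea -exprM ltr_eXn2l // N2.
have ea : abs (a ^+ d + lam * b ^+ d) = L ^+ (be * d).+1.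
  by rewrite -e2 addrC; apply: (abs_strict H); rewrite e1 e2 ltr_eXn2l // N3.
by rewrite ea -exprM ltr_eXn2l // N4.
Qed.

Lemma inv_transfer (R : realType) p (abs : algC -> R) : is_padic_abs p abs ->
  forall d lam (a b a1 b1 : algC), 1 < abs lam ->
  a1 * lam = a -> b1 * lam = b ->
  abs lam * abs b ^+ d < abs a ^+ d -> abs lam * abs b1 ^+ d < abs a1 ^+ d.
Proof.
move=> H d lam a b a1 b1 hL <- <-; rewrite !(abs_M H) !exprMn mulrA.
rewrite ltr_pM2r //; apply: exprn_gt0; lra.
Qed.
Lemma inv1 (R : realType) p (abs : algC -> R) : is_padic_abs p abs ->
  forall d (A B : {poly algC}) lam, (2 <= d)%N -> A != 0 -> B != 0 ->
  (forall i, abs A`_i <= 1) -> (forall i, abs B`_i <= 1) ->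
  abs (resultant A B) = 1 -> abs (lead_coef A) = 1 -> abs (lead_coef B) = 1 ->
  (A`_0 != 0 -> abs A`_0 = 1) -> lam != 0 ->
  Inv d (abs lam) (abs (Acn d A B 1).[lam]) (abs (Bcn d A B 1).[lam]).
Proof.
move=> H d A B lam hd A0 B0 hA hB hR hlA hlB h0 l0.
have hd0 : (0 < d)%N by apply: leq_trans hd.
have gl := abs_ge0 H lam.
have lpos : 0 < abs lam.
  rewrite lt_neqAle gl andbT; apply/eqP => e; move/eqP: l0; apply; apply/(abs_eq0 H); by rewrite e.
have [hL|hL1] := ltP 1 (abs lam).
  rewrite /Inv hL.
  have ha := F3 H hA hlA hL; have hb := F3 H hB hlB hL.
  have g := base_gt H hd hL ha hb.
  have [e0|n0] := eqVneq A.[0] 0.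
    have [e1 e2] := ABc1_z B lam hd0 e0.
    exact: (inv_transfer H hL e1 e2 g).
  by have [-> ->] := ABc1_nz d B lam n0.
have hL : (1 < abs lam) = false by apply/negbTE; rewrite -leNgt.
have hm := F4 H A0 B0 hA hB hR hlA hL1.
have ua := F1 H hA hL1; have ub := F1 H hB hL1.
have hmax : Num.max (abs A.[lam]) (abs B.[lam]) = 1.
  by apply: le_anti; rewrite hm ge_max ua ub.
have [e0|n0] := eqVneq A.[0] 0; last first.
  have A00 : A`_0 != 0 by rewrite -horner_coef0.
  have I0 : Inv d (abs lam) (abs A.[lam]) (abs B.[lam]).
    rewrite /Inv hL; split => // l1; apply: (F2 H hA (h0 A00) l1).
  have [I1 _] := step_inv H hd I0.
  by have [-> ->] := ABc1_nz d B lam n0.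
have [e1 e2] := ABc1_z B lam hd0 e0.
have [l1|l1] := ltP (abs lam) 1; last first.
  have eL : abs lam = 1 by lra.
  have I0 : Inv d (abs lam) (abs A.[lam]) (abs B.[lam]).
    by rewrite /Inv hL; split => // ?; lra.
  have [I1 _] := step_inv H hd I0.
  have ea1 : abs (Acn d A B 1).[lam] = abs (A.[lam] ^+ d + lam * B.[lam] ^+ d).
    by rewrite -e1 (abs_M H) eL mulr1.
  have eb1 : abs (Bcn d A B 1).[lam] = abs (A.[lam] * B.[lam] ^+ d.-1).
    by rewrite -e2 (abs_M H) eL mulr1.
  by rewrite ea1 eb1.
rewrite /Inv hL.
have hB0 : abs B`_0 = 1.
  have := F4 H A0 B0 hA hB hR hlA (_ : abs 0 <= 1).
  rewrite !horner_coef0 -horner_coef0 e0 (abs_0 H) => /(_ ltac:(lra)).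
  have := hB 0%N; have := abs_ge0 H B`_0; rewrite /Num.max; case: ifP; lra.
have eb := F2 H hB hB0 l1.
have ea : abs A.[lam] <= abs lam by apply: (F0 H hA) => //; rewrite -horner_coef0.
have ga := abs_ge0 H A.[lam].
have ea0 : abs (A.[lam] ^+ d + lam * B.[lam] ^+ d) = abs lam.
  have eL : abs (lam * B.[lam] ^+ d) = abs lam by rewrite (abs_M H) (abs_X H) eb expr1n mulr1.
  rewrite addrC -eL; apply: (abs_strict H); rewrite eL.
  rewrite (abs_X H); apply: le_lt_trans (_ : abs lam ^+ d < abs lam).
    by apply: lerXn2r; rewrite ?nnegrE.
  case: d hd {hd0 e1 e2 eL} => [|[|e]] // _; rewrite !exprS.
  by have := exprn_ile1 e gl hL1; have := exprn_ge0 e gl; nra.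
have ha1 : abs (Acn d A B 1).[lam] = 1.
  move: ea0; rewrite -e1 (abs_M H) => h; apply: (mulIf (lt0r_neq0 lpos)); lra.
have hb1 : abs (Bcn d A B 1).[lam] <= 1.
  have : abs (Bcn d A B 1).[lam] * abs lam <= abs lam.
    by rewrite -(abs_M H) e2 (abs_M H) (abs_X H) eb expr1n mulr1.
  have := abs_ge0 H (Bcn d A B 1).[lam]; nra.
split => //; first by rewrite ha1.
by rewrite ha1 /Num.max; case: ifP => //; lra.
Qed.
Unset Implicit Arguments.
Theorem proposition4p3 (R : realType) (d : nat) (A B : {poly algC})
  (p : nat) (abs : algC -> R) :
  (2 <= d)%N ->
  A != 0 -> B != 0 -> coprimep A B ->
  is_padic_abs p abs ->
  (forall i, abs A`_i <= 1) ->
  (forall i, abs B`_i <= 1) ->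
  abs (resultant A B) = 1 ->
  abs (lead_coef A) = 1 ->
  abs (lead_coef B) = 1 ->
  (A`_0 != 0 -> abs A`_0 = 1) ->
  forall lam : algC, lam != 0 ->
  forall n : nat, (1 <= n)%N ->
    ln (Mcnv abs d A B n lam) / (d ^ n)%:R = ln (Mcnv abs d A B 1 lam) / d%:R.
Proof.
move=> hd A0 B0 _ H hA hB hR hlA hlB h0 lam l0 n hn.
have I1 := inv1 H hd A0 B0 hA hB hR hlA hlB h0 l0.
have MS : forall m, (1 <= m)%N -> Mcnv abs d A B m.+1 lam =
    Num.max (abs ((Acn d A B m).[lam] ^+ d + lam * (Bcn d A B m).[lam] ^+ d))
            (abs ((Acn d A B m).[lam] * (Bcn d A B m).[lam] ^+ d.-1)).
  by move=> m hm; rewrite /Mcnv (@Acn_succ d A B m lam hm) (@Bcn_succ d A B m lam hm).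
have Iall : forall k, Inv d (abs lam) (abs (Acn d A B k.+1).[lam]) (abs (Bcn d A B k.+1).[lam]) /\
    Mcnv abs d A B k.+2 lam = Mcnv abs d A B k.+1 lam ^+ d.
  elim=> [|k [IH _]].
    split => //; have [I2 E] := step_inv H hd I1.
    by rewrite MS // E.
  have [I2 E] := step_inv H hd IH.
  rewrite -(@Acn_succ d A B k.+1 lam isT) -(@Bcn_succ d A B k.+1 lam isT) in I2.
  split => //.
  have [I3 E3] := step_inv H hd I2.
  by rewrite MS // E3.
have Mpow : forall k, Mcnv abs d A B k.+1 lam = Mcnv abs d A B 1 lam ^+ (d ^ k).
  elim=> [|k IH]; first by rewrite expn0 expr1.
  by rewrite (Iall k).2 IH -exprM expnSr.
case: n hn => [|k] // _.
rewrite Mpow.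
have hM0 : 0 <= Mcnv abs d A B 1 lam by rewrite /Mcnv le_max (abs_ge0 H).
have hd0 : (0 < d)%N by apply: leq_trans hd.
have dk : (0 < d ^ k)%N by rewrite expn_gt0 hd0.
have [Mp|Mz] := ltP 0 (Mcnv abs d A B 1 lam).
  rewrite lnXn // expnSr natrM -mulr_natr.
  have h1 : (d ^ k)%:R != 0 :> R by rewrite pnatr_eq0 -lt0n.
  have h2 : d%:R != 0 :> R by rewrite pnatr_eq0 -lt0n.
  by field; rewrite h1 h2.
have e0 : Mcnv abs d A B 1 lam = 0 by apply: le_anti; rewrite Mz hM0.
rewrite e0 (ln0 (lexx 0)); case: (d ^ k)%N dk => [|m] // _.
by rewrite exprS mul0r (ln0 (lexx 0)) !mul0r.
Qed.
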